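(* Let $M$ be a duplicial module in a pre-additive category. Then $b_n\pi_n=\pi_{n-1}b_n$ for all $n\ge1$ and $d_n\pi_n=\pi_{n+1}d_n$ for all $n\ge0$.
   Context: Let $\mathcal A$ be a pre-additive category. Let $\Lambda_+$ be the category with objects $[n]$, $n\ge0$, where $\Lambda_+([m],[n])$ is the set of weakly monotone $f:\mathbb Z\to\mathbb Z$ with $f(j+m+1)=f(j)+n+1$ for all $j$ and $f(0)\ge0$. Define $\varepsilon^n_i:[n-1]\to[n]$ ($n\ge1$, $0\le i\le n$) by $\varepsilon^n_i(j)=j$ for $0\le j<i$, $j+1$ for $i\le j\le n-1$, and $\eta^n_i:[n+1]\to[n]$ ($0\le i\le n+1$) by $\eta^n_i(j)=j$ for $0\le j\le i$, $j-1$ for $i<j\le n+1$. A duplicial module is a functor $M:\Lambda_+^{op}\to\mathcal A$; $M_n=M([n])$, $\partial_{n,i}=M(\varepsilon^n_i):M_n\to M_{n-1}$, $s_{n,i}=M(\eta^n_i):M_n\to M_{n+1}$. Convention $M_{-1}=0$, maps into/out of it zero. Define $b_n=\sum_{i=0}^n(-1)^i\partial_{n,i}$ ($b_0=0$), $d_n=\sum_{i=0}^{n+1}(-1)^is_{n,i}$, the Karoubi operator $\kappa_n=(-1)^n(\partial_{n+1,0}s_{n,n+1}-s_{n-1,n}\partial_{n,0})$ (so $\kappa_0=\partial_{1,0}s_{0,1}$), and the Dwyer–Kan operator $\pi_n=(-1)^n\partial_{n+1,0}\kappa_{n+1}^n s_{n,n+1}$. *)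

(* Defs.v *)
From mathcomp Require Import all_boot all_order all_algebra.
Set Implicit Arguments. Unset Strict Implicit. Unset Printing Implicit Defensive.
Import Order.TTheory GRing.Theory Num.Theory.
Local Open Scope ring_scope.

Record preadditive := PreAdditive {
  Obj : Type;
  Hom : Obj -> Obj -> zmodType;
  hcomp : forall a b c : Obj, Hom b c -> Hom a b -> Hom a c;
  idm : forall a : Obj, Hom a a;
  hcompA : forall a b c d (f : Hom c d) (g : Hom b c) (h : Hom a b),
      hcomp f (hcomp g h) = hcomp (hcomp f g) h;
  hcomp1m : forall a b (f : Hom a b), hcomp (idm b) f = f;
  hcompm1 : forall a b (f : Hom a b), hcomp f (idm a) = f;
  hcompDl : forall a b c (f g : Hom b c) (h : Hom a b),
      hcomp (f + g) h = hcomp f h + hcomp g h;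
  hcompDr : forall a b c (f : Hom b c) (g h : Hom a b),
      hcomp f (g + h) = hcomp f g + hcomp f h
}.
Arguments hcomp {p a b c}.
Arguments idm {p}.

(* Morphisms [m] -> [n] of Lambda_+ : weakly monotone f : Z -> Z with
   f (j + m + 1) = f j + n + 1 and f 0 >= 0. *)
Definition is_lam (m n : nat) (f : int -> int) : Prop :=
  [/\ (forall x y : int, x <= y -> f x <= f y),
      (forall j : int, f (j + (m.+1)%:Z) = f j + (n.+1)%:Z)
    & 0 <= f 0].

(* A duplicial module M : Lambda_+^op -> C.  The action is given on all
   functions Z -> Z (values on non-morphisms are irrelevant junk); the functor
   laws are required on the morphisms of Lambda_+. *)
Record duplicial (C : preadditive) := Duplicial {
  ob : nat -> Obj C;
  act : forall m n : nat, (int -> int) -> Hom (ob n) (ob m);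
  act_id : forall n : nat, act n n id = idm (ob n);
  act_comp : forall (l m n : nat) (f g : int -> int),
      is_lam l m f -> is_lam m n g ->
      act l n (g \o f) = hcomp (act l m f) (act m n g)
}.

(* epsilon^n_i : [n-1] -> [n], extended periodically to Z. *)
Definition eps (n i : nat) (j : int) : int :=
  let q := (j %/ n%:Z)%Z in let r := (j %% n%:Z)%Z in
  q * (n.+1)%:Z + (if r < i%:Z then r else r + 1).

(* eta^n_i : [n+1] -> [n], extended periodically to Z. *)
Definition eta (n i : nat) (j : int) : int :=
  let q := (j %/ (n.+2)%:Z)%Z in let r := (j %% (n.+2)%:Z)%Z in
  q * (n.+1)%:Z + (if r <= i%:Z then r else r - 1).

Section Ops.
Variables (C : preadditive) (M : duplicial C).

(* face n i = partial_{n+1,i} : M_{n+1} -> M_n *)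
Definition face (n i : nat) : Hom (ob M n.+1) (ob M n) := act M n n.+1 (eps n.+1 i).
Definition degen (n i : nat) : Hom (ob M n) (ob M n.+1) := act M n.+1 n (eta n i).

(* bnd n = b_{n+1} : M_{n+1} -> M_n *)
Definition bnd (n : nat) : Hom (ob M n.+1) (ob M n) :=
  \sum_(i < n.+2) (face n i *~ ((-1) ^+ i)).
Definition dd (n : nat) : Hom (ob M n) (ob M n.+1) :=
  \sum_(i < n.+2) (degen n i *~ ((-1) ^+ i)).

(* Karoubi operator kappa_n (with the convention M_{-1} = 0 for n = 0). *)
Definition kappa (n : nat) : Hom (ob M n) (ob M n) :=
  match n as n0 return Hom (ob M n0) (ob M n0) with
  | 0 => hcomp (face 0 0) (degen 0 1)
  | k.+1 => (hcomp (face k.+1 0) (degen k.+1 k.+2)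
             - hcomp (degen k k.+1) (face k 0)) *~ ((-1) ^+ k.+1)
  end.

Definition kappa_pow (n k : nat) : Hom (ob M n) (ob M n) :=
  iter k (fun f => hcomp (kappa n) f) (idm (ob M n)).

Definition dk_pi (n : nat) : Hom (ob M n) (ob M n) :=
  hcomp (face n 0) (hcomp (kappa_pow n.+1 n) (degen n n.+1)) *~ ((-1) ^+ n).
End Ops.

(* Main.v *)
Require Import Defs.
From mathcomp Require Import all_boot all_order all_algebra.
From mathcomp Require Import zify.
From Stdlib Require Import FunctionalExtensionality.
Set Implicit Arguments. Unset Strict Implicit. Unset Printing Implicit Defensive.
Import Order.TTheory GRing.Theory Num.Theory.
Import Defs.
Local Open Scope ring_scope.


Definition ext (p : nat) (q : int) (F : int -> int) (x : int) : int :=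
  (x %/ p%:Z)%Z * q + F (x %% p%:Z)%Z.

Lemma epsE n i : eps n i = ext n (n.+1)%:Z (fun r => if r < i%:Z then r else r + 1).
Proof. by []. Qed.
Lemma etaE n i : eta n i = ext n.+2 (n.+1)%:Z (fun r => if r <= i%:Z then r else r - 1).
Proof. by []. Qed.

Lemma ext_shift p q F k y : (0 < p)%N -> ext p q F (k * p%:Z + y) = k * q + ext p q F y.
Proof. move=> hp; rewrite /ext divzMDl ?modzMDl ?mulrDl ?addrA //; lia. Qed.

Lemma ext_small p q F r : 0 <= r -> r < p%:Z -> ext p q F r = F r.
Proof. move=> h1 h2; rewrite /ext divz_small ?modz_small ?mul0r ?add0r //; apply/andP; split => //. Qed.

Lemma ext_comp p1 p2 q2 F G x : (0 < p1)%N -> (0 < p2)%N ->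
  ext p2 q2 G (ext p1 p2%:Z F x) = (x %/ p1%:Z)%Z * q2 + ext p2 q2 G (F (x %% p1%:Z)%Z).
Proof. move=> h1 h2; rewrite {1}/ext; exact: ext_shift. Qed.

Lemma ext_val p q F v : (0 < p)%N -> 0 <= v -> v < p%:Z + p%:Z ->
  ext p q F v = if v < p%:Z then F v else q + F (v - p%:Z).
Proof.
move=> hp h1 h2; case: ifP => h3; first by rewrite ext_small.
rewrite {1}(_ : v = 1 * p%:Z + (v - p%:Z)); last by lia.
rewrite ext_shift // mul1r ext_small //.
- move/negbT: h3; lia.
- lia.
Qed.

Lemma modr_rng x p : (0 < p)%N -> 0 <= (x %% p%:Z)%Z /\ (x %% p%:Z)%Z < p%:Z.
Proof. move=> hp; split; [apply: modz_ge0 | apply: ltz_pmod]; lia. Qed.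

Ltac case_if := match goal with |- context[if ?c then _ else _] => case: (boolP c) => ? end.
Ltac rw_ext := match goal with |- context[ext ?p ?q ?G ?v] =>
   rewrite (@ext_val p q G v); [ | lia | lia | lia] end.
Ltac pt := repeat (first [case_if | rw_ext | progress cbv beta]); lia.

Ltac fun_id := apply: functional_extensionality => ?; rewrite /comp !ext_comp //;
  congr (_ + _);
  match goal with |- context [(?y %% (Posz ?p))%Z] =>
    let hr1 := fresh "hr" in let hr2 := fresh "hr" in let r := fresh "r" in
    have [hr1 hr2] := @modr_rng y p isT; move: (y %% _)%Z hr1 hr2 => r hr1 hr2 end;
  cbv beta; pt.

Lemma FFf n i j : (i <= j <= n.+1)%N ->
  eps n.+2 j.+1 \o eps n.+1 i = eps n.+2 i \o eps n.+1 j.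
Proof. move=> hij; rewrite !epsE; fun_id. Qed.

Lemma SSf n c a : (c <= a <= n.+1)%N ->
  eta n c \o eta n.+1 a.+1 = eta n a \o eta n.+1 c.
Proof. move=> h; rewrite !etaE; fun_id. Qed.

Lemma FSltf M i j : (i <= j <= M.+1)%N -> ~~ ((i == 0) && (j == M.+1))%N ->
  eta M.+1 j.+1 \o eps M.+2 i = eps M.+1 i \o eta M j.
Proof. move=> h1 h2; rewrite !etaE !epsE; fun_id. Qed.

Lemma FSgtf M i j : (j < i <= M.+1)%N ->
  eta M.+1 j \o eps M.+2 i.+1 = eps M.+1 i \o eta M j.
Proof. move=> h1; rewrite !etaE !epsE; fun_id. Qed.

Lemma ext_id p : (0 < p)%N -> ext p p%:Z (fun r => r) = id.
Proof. move=> hp; apply: functional_extensionality => x; by rewrite /ext /= -divz_eq. Qed.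

Lemma FSid1f N j : (j <= N.+1)%N -> eta N j \o eps N.+1 j = id.
Proof. move=> h; rewrite -(@ext_id N.+1) // !etaE !epsE; fun_id. Qed.

Lemma FSid2f N j : (j <= N)%N -> eta N j \o eps N.+1 j.+1 = id.
Proof. move=> h; rewrite -(@ext_id N.+1) // !etaE !epsE; fun_id. Qed.

Lemma ext_mono p q F : (0 < p)%N -> 0 <= q ->
  (forall u v, 0 <= u -> u <= v -> v < p%:Z -> F u <= F v) ->
  F (p%:Z - 1) <= F 0 + q -> forall x y, x <= y -> ext p q F x <= ext p q F y.
Proof.
move=> hp hq hF hFp x y hxy; rewrite /ext.
have ex := divz_eq x p%:Z; have ey := divz_eq y p%:Z.
have [r1 r2] := @modr_rng x p hp; have [s1 s2] := @modr_rng y p hp.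
move: (x %/ _)%Z (x %% _)%Z (y %/ _)%Z (y %% _)%Z ex ey r1 r2 s1 s2 => a r b s ex ey r1 r2 s1 s2.
have hab : a <= b by nia.
case: (boolP (a == b)) => [/eqP eab|nab].
  rewrite eab lerD2l; apply: hF => //; nia.
have hab' : a + 1 <= b by lia.
have h1 : F r <= F (p%:Z - 1) by apply: hF => //; lia.
have h2 : F 0 <= F s by apply: hF => //; lia.
nia.
Qed.

Lemma is_lam_ext m n F :
  (forall u v, 0 <= u -> u <= v -> v < (m.+1)%:Z -> F u <= F v) ->
  F m%:Z <= F 0 + (n.+1)%:Z -> 0 <= F 0 -> is_lam m n (ext m.+1 (n.+1)%:Z F).
Proof.
move=> h1 h2 h3; split.
- apply: ext_mono => //; rewrite (_ : (m.+1)%:Z - 1 = m%:Z) //; lia.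
- by move=> j; rewrite addrC -[X in X + j]mul1r ext_shift // mul1r addrC.
- by rewrite ext_small.
Qed.

Lemma eps_lam n i : is_lam n n.+1 (eps n.+1 i).
Proof. rewrite epsE; apply: is_lam_ext => [u v *|*|]; repeat case_if; lia. Qed.

Lemma eta_lam n i : is_lam n.+1 n (eta n i).
Proof. rewrite etaE; apply: is_lam_ext => [u v *|*|]; repeat case_if; lia. Qed.



Lemma hcomp0l (C : preadditive) (a b c : Obj C) (f : Hom a b) : hcomp (0 : Hom b c) f = 0.
Proof. apply: (@addrI _ (hcomp (0 : Hom b c) f)); by rewrite -hcompDl !addr0. Qed.
Lemma hcomp0r (C : preadditive) (a b c : Obj C) (f : Hom b c) : hcomp f (0 : Hom a b) = 0.
Proof. apply: (@addrI _ (hcomp f (0 : Hom a b))); by rewrite -hcompDr !addr0. Qed.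
Lemma hcompNl (C : preadditive) (a b c : Obj C) (f : Hom b c) (g : Hom a b) : hcomp (- f) g = - hcomp f g.
Proof. apply/eqP; rewrite -addr_eq0 -hcompDl addNr hcomp0l //. Qed.
Lemma hcompNr (C : preadditive) (a b c : Obj C) (f : Hom b c) (g : Hom a b) : hcomp f (- g) = - hcomp f g.
Proof. apply/eqP; rewrite -addr_eq0 -hcompDr addNr hcomp0r //. Qed.
Lemma hcompBl (C : preadditive) (a b c : Obj C) (f f' : Hom b c) (g : Hom a b) : hcomp (f - f') g = hcomp f g - hcomp f' g.
Proof. by rewrite hcompDl hcompNl. Qed.
Lemma hcompBr (C : preadditive) (a b c : Obj C) (f : Hom b c) (g g' : Hom a b) : hcomp f (g - g') = hcomp f g - hcomp f g'.
Proof. by rewrite hcompDr hcompNr. Qed.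
Lemma hcompMnl (C : preadditive) (a b c : Obj C) (f : Hom b c) (g : Hom a b) n : hcomp (f *+ n) g = hcomp f g *+ n.
Proof. elim: n => [|n IH]; first by rewrite !mulr0n hcomp0l. by rewrite !mulrS hcompDl IH. Qed.
Lemma hcompMnr (C : preadditive) (a b c : Obj C) (f : Hom b c) (g : Hom a b) n : hcomp f (g *+ n) = hcomp f g *+ n.
Proof. elim: n => [|n IH]; first by rewrite !mulr0n hcomp0r. by rewrite !mulrS hcompDr IH. Qed.
Lemma hcompMzl (C : preadditive) (a b c : Obj C) (f : Hom b c) (g : Hom a b) z : hcomp (f *~ z) g = hcomp f g *~ z.
Proof. case: z => n; first exact: hcompMnl. by rewrite !NegzE !mulrNz hcompNl hcompMnl. Qed.
Lemma hcompMzr (C : preadditive) (a b c : Obj C) (f : Hom b c) (g : Hom a b) z : hcomp f (g *~ z) = hcomp f g *~ z.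
Proof. case: z => n; first exact: hcompMnr. by rewrite !NegzE !mulrNz hcompNr hcompMnr. Qed.
Lemma hcomp_suml (C : preadditive) (a b c : Obj C) I (r : seq I) (P : pred I) (F : I -> Hom b c) (g : Hom a b) :
  hcomp (\sum_(i <- r | P i) F i) g = \sum_(i <- r | P i) hcomp (F i) g.
Proof. apply: (big_morph (fun f => hcomp f g)); [exact: (fun x y => hcompDl x y g)|exact: hcomp0l]. Qed.
Lemma hcomp_sumr (C : preadditive) (a b c : Obj C) I (r : seq I) (P : pred I) (F : I -> Hom a b) (g : Hom b c) :
  hcomp g (\sum_(i <- r | P i) F i) = \sum_(i <- r | P i) hcomp g (F i).
Proof. apply: (big_morph (fun f => hcomp g f)); [exact: (fun x y => hcompDr g x y)|exact: hcomp0r]. Qed.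

Lemma actc (C : preadditive) (M : duplicial C) l m n f g : is_lam l m f -> is_lam m n g ->
  hcomp (act M l m f) (act M m n g) = act M l n (g \o f).
Proof. by move=> hf hg; rewrite (act_comp M hf hg). Qed.

Ltac lams := try apply: eps_lam; try apply: eta_lam.

Lemma FF C (M : duplicial C) n i j : (i <= j <= n.+1)%N ->
  hcomp (face M n i) (face M n.+1 j.+1) = hcomp (face M n j) (face M n.+1 i).
Proof. move=> h; rewrite /face !actc ?(FFf h) //; lams. Qed.

Lemma SS C (M : duplicial C) n c a : (c <= a <= n.+1)%N ->
  hcomp (degen M n.+1 a.+1) (degen M n c) = hcomp (degen M n.+1 c) (degen M n a).
Proof. move=> h; rewrite /degen !actc ?(SSf h) //; lams. Qed.

Lemma FSid1 C (M : duplicial C) N j : (j <= N.+1)%N -> hcomp (face M N j) (degen M N j) = idm _.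
Proof. move=> h; rewrite /degen /face !actc ?(FSid1f h) ?act_id //; lams. Qed.

Lemma FSid2 C (M : duplicial C) N j : (j <= N)%N -> hcomp (face M N j.+1) (degen M N j) = idm _.
Proof. move=> h; rewrite /degen /face !actc ?(FSid2f h) ?act_id //; lams. Qed.

Lemma FSlt C (M : duplicial C) m i j : (i <= j <= m.+1)%N -> ~~ ((i == 0) && (j == m.+1))%N ->
  hcomp (face M m.+1 i) (degen M m.+1 j.+1) = hcomp (degen M m j) (face M m i).
Proof. move=> h1 h2; rewrite /degen /face !actc ?(FSltf h1 h2) //; lams. Qed.

Lemma FSgt C (M : duplicial C) m i j : (j < i <= m.+1)%N ->
  hcomp (face M m.+1 i.+1) (degen M m.+1 j) = hcomp (degen M m j) (face M m i).
Proof. move=> h1; rewrite /degen /face !actc ?(FSgtf h1) //; lams. Qed.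


Lemma kappaS C (M : duplicial C) n : kappa M n.+1 =
  (hcomp (face M n.+1 0) (degen M n.+1 n.+2) - hcomp (degen M n n.+1) (face M n 0)) *~ ((-1) ^+ n.+1).
Proof. by []. Qed.

Lemma z1 C (M : duplicial C) n : hcomp (kappa M n.+1) (degen M n 0) = 0.
Proof.
rewrite kappaS hcompMzl hcompBl.
have -> : hcomp (hcomp (face M n.+1 0) (degen M n.+1 n.+2)) (degen M n 0) = degen M n n.+1.
  by rewrite -hcompA (@SS _ M n 0 n.+1 ltac:(lia)) hcompA (@FSid1 _ M n.+1 0 ltac:(lia)) hcomp1m.
have -> : hcomp (hcomp (degen M n n.+1) (face M n 0)) (degen M n 0) = degen M n n.+1.
  by rewrite -hcompA (@FSid1 _ M n 0 ltac:(lia)) hcompm1.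
by rewrite subrr mul0rz.
Qed.

Lemma z2 C (M : duplicial C) n : hcomp (face M n n.+1) (kappa M n.+1) = 0.
Proof.
rewrite kappaS hcompMzr hcompBr.
have -> : hcomp (face M n n.+1) (hcomp (face M n.+1 0) (degen M n.+1 n.+2)) = face M n 0.
  by rewrite hcompA -(@FF _ M n 0 n.+1 ltac:(lia)) -hcompA (@FSid1 _ M n.+1 n.+2 ltac:(lia)) hcompm1.
have -> : hcomp (face M n n.+1) (hcomp (degen M n n.+1) (face M n 0)) = face M n 0.
  by rewrite hcompA (@FSid1 _ M n n.+1 ltac:(lia)) hcomp1m.
by rewrite subrr mul0rz.
Qed.

Lemma e1 C (M : duplicial C) m i : (i <= m)%N ->
  hcomp (face M m.+1 i.+1) (kappa M m.+2) = - hcomp (kappa M m.+1) (face M m.+1 i.+2).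
Proof.
move=> hi; rewrite !kappaS hcompMzr hcompMzl hcompBr hcompBl.
have -> : hcomp (face M m.+1 i.+1) (hcomp (face M m.+2 0) (degen M m.+2 m.+3)) =
   hcomp (hcomp (face M m.+1 0) (degen M m.+1 m.+2)) (face M m.+1 i.+2).
  rewrite hcompA -(@FF _ M m.+1 0 i.+1 ltac:(lia)) -hcompA.
  by rewrite (@FSlt _ M m.+1 i.+2 m.+2 ltac:(lia) ltac:(lia)) hcompA.
have -> : hcomp (face M m.+1 i.+1) (hcomp (degen M m.+1 m.+2) (face M m.+1 0)) =
   hcomp (hcomp (degen M m m.+1) (face M m 0)) (face M m.+1 i.+2).
  rewrite hcompA (@FSlt _ M m i.+1 m.+1 ltac:(lia) ltac:(lia)).
  by rewrite -hcompA -(@FF _ M m 0 i.+1 ltac:(lia)) hcompA.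
by rewrite exprS mulN1r mulrNz.
Qed.

Lemma e2 C (M : duplicial C) m j : (j <= m)%N ->
  hcomp (kappa M m.+2) (degen M m.+1 j.+1) = - hcomp (degen M m.+1 j) (kappa M m.+1).
Proof.
move=> hj; rewrite !kappaS hcompMzr hcompMzl hcompBr hcompBl.
have -> : hcomp (hcomp (face M m.+2 0) (degen M m.+2 m.+3)) (degen M m.+1 j.+1) =
   hcomp (degen M m.+1 j) (hcomp (face M m.+1 0) (degen M m.+1 m.+2)).
  rewrite -hcompA (@SS _ M m.+1 j.+1 m.+2 ltac:(lia)).
  by rewrite hcompA (@FSlt _ M m.+1 0 j ltac:(lia) ltac:(lia)) -hcompA.
have -> : hcomp (hcomp (degen M m.+1 m.+2) (face M m.+1 0)) (degen M m.+1 j.+1) =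
   hcomp (degen M m.+1 j) (hcomp (degen M m m.+1) (face M m 0)).
  rewrite -hcompA (@FSlt _ M m 0 j ltac:(lia) ltac:(lia)).
  by rewrite hcompA (@SS _ M m j m.+1 ltac:(lia)) -hcompA.
by rewrite exprS mulN1r mulrNz.
Qed.


Lemma kpS C (M : duplicial C) n k : kappa_pow M n k.+1 = hcomp (kappa M n) (kappa_pow M n k).
Proof. by []. Qed.
Lemma kp0 C (M : duplicial C) n : kappa_pow M n 0 = idm _.
Proof. by []. Qed.

Lemma sgS (V : zmodType) (x : V) a : x *~ (-1) ^+ a.+1 = - (x *~ (-1) ^+ a).
Proof. by rewrite exprS mulN1r mulrNz. Qed.

Lemma Lpow_F C (M : duplicial C) n k i : (1 <= i)%N -> (i + k <= n.+1)%N ->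
  hcomp (face M n i) (kappa_pow M n.+1 k) = hcomp (kappa_pow M n k) (face M n (i + k)) *~ (-1) ^+ k.
Proof.
elim: k i => [|k IH] i h1 h2.
  by rewrite !kp0 hcompm1 hcomp1m addn0 expr0 mulr1z.
rewrite kpS hcompA.
case: n IH h2 => [|m] IH h2; first by lia.
case: i h1 h2 => [|i] h1 h2; first by lia.
rewrite (@e1 _ M m i ltac:(lia)) hcompNl -hcompA.
rewrite (IH i.+2 ltac:(lia) ltac:(lia)) hcompMzr hcompA -kpS sgS.
by rewrite addSnnS.
Qed.

Lemma Lpow_F0 C (M : duplicial C) n k i : (1 <= i <= n.+1)%N -> (n.+2 <= i + k)%N ->
  hcomp (face M n i) (kappa_pow M n.+1 k) = 0.
Proof.
elim: k i => [|k IH] i h1 h2; first by lia.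
rewrite kpS hcompA.
case: (boolP (i == n.+1)) => [/eqP ->|hne].
  by rewrite z2 hcomp0l.
case: n IH h1 h2 hne => [|m] IH h1 h2 hne; first by lia.
case: i h1 h2 hne => [|i] h1 h2 hne; first by lia.
rewrite (@e1 _ M m i ltac:(lia)) hcompNl -hcompA.
by rewrite (IH i.+2 ltac:(lia) ltac:(lia)) hcomp0r oppr0.
Qed.

Lemma Lpow_S C (M : duplicial C) n k j : (k <= j <= n)%N ->
  hcomp (kappa_pow M n.+1 k) (degen M n j) = hcomp (degen M n (j - k)) (kappa_pow M n k) *~ (-1) ^+ k.
Proof.
elim: k => [|k IH] h.
  by rewrite !kp0 hcompm1 hcomp1m subn0 expr0 mulr1z.
rewrite kpS -hcompA (IH ltac:(lia)) hcompMzr hcompA.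
case: n IH h => [|m] IH h; first by lia.
have -> : (j - k = (j - k.+1).+1)%N by lia.
rewrite (@e2 _ M m (j - k.+1) ltac:(lia)) hcompNl -hcompA -kpS.
by rewrite sgS mulNrz.
Qed.

Lemma Lpow_S0 C (M : duplicial C) n k j : (j < k)%N -> (j <= n)%N ->
  hcomp (kappa_pow M n.+1 k) (degen M n j) = 0.
Proof.
elim: k => [|k IH] h1 h2; first by lia.
rewrite kpS -hcompA.
case: (boolP (j < k)%N) => hjk; first by rewrite (IH hjk h2) hcomp0r.
have ejk : j = k by lia.
rewrite ejk (@Lpow_S _ M n k k ltac:(lia)) subnn hcompMzr hcompA z1 hcomp0l.
by rewrite mul0rz.
Qed.


Lemma dsum1 (V : zmodType) N (A : nat -> nat -> V) :
  (forall i j, (i <= j <= N)%N -> A i j.+1 = A j i) ->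
  \sum_(0 <= i < N.+1) \sum_(0 <= j < N.+2) A i j *~ (-1) ^+ (i + j) = 0.
Proof.
move=> hA.
suff H : forall m, (m <= N)%N ->
  \sum_(0 <= i < m.+1) \sum_(0 <= j < m.+2) A i j *~ (-1) ^+ (i + j) = 0 by exact: H.
elim=> [|m IH] hm.
  by rewrite big_nat1 big_nat_recr //= big_nat1 (hA 0 0) // expr0 mulr1z expr1 mulrN1z subrr.
rewrite big_nat_recr //=.
under eq_bigr => i _ do rewrite big_nat_recr //=.
rewrite big_split /= IH ?add0r; last by lia.
rewrite (big_nat_recr m.+2) //= (big_nat_recr m.+1) //=.
rewrite (hA m.+1 m.+1); last by lia.
have -> : \sum_(0 <= i < m.+1) A i m.+2 *~ (-1) ^+ (i + m.+2) =
          - \sum_(0 <= i < m.+1) A m.+1 i *~ (-1) ^+ (m.+1 + i).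
  rewrite -sumrN; apply: eq_big_nat => i hi.
  by rewrite hA ?addnS ?sgS 1?addnC //; lia.
by rewrite [(m.+1 + m.+2)%N]addnS sgS addrK addNr.
Qed.

Lemma dsum2 (V : zmodType) N (X Y : nat -> nat -> V) :
  (forall i, (i <= N)%N -> X i i = X i.+1 i) ->
  (forall i j, (i <= j < N)%N -> X i j.+1 = Y j i) ->
  (forall i j, (j < i <= N)%N -> X i.+1 j = Y j i) ->
  \sum_(0 <= i < N.+2) \sum_(0 <= j < N.+1) X i j *~ (-1) ^+ (i + j) +
  \sum_(0 <= j < N) \sum_(0 <= i < N.+1) Y j i *~ (-1) ^+ (i + j) = 0.
Proof.
move=> h1 h2 h3.
suff H : forall m, (m <= N)%N ->
  \sum_(0 <= i < m.+2) \sum_(0 <= j < m.+1) X i j *~ (-1) ^+ (i + j) +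
  \sum_(0 <= j < m) \sum_(0 <= i < m.+1) Y j i *~ (-1) ^+ (i + j) = 0 by exact: H.
elim=> [|m IH] hm.
  rewrite [X in _ + X]big_geq // addr0 big_nat_recr //= big_nat1 !big_nat1 (h1 0) //.
  by rewrite expr0 mulr1z expr1 mulrN1z subrr.
rewrite (big_nat_recr m.+2) //= (big_nat_recr m 0 (fun j => \sum_(0 <= i < m.+2) Y j i *~ (-1) ^+ (i + j))) //=.
under eq_bigr => i _ do rewrite (big_nat_recr m.+1) //=.
under [X in _ + (X + _)]eq_bigr => i _ do rewrite (big_nat_recr m.+1) //=.
rewrite !big_split /=.
set A := \sum_(0 <= i < m.+2) \sum_(0 <= i0 < m.+1) _.
set D := \sum_(0 <= i < m) \sum_(0 <= i0 < m.+1) _.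
set B := \sum_(0 <= i < m.+2) X i m.+1 *~ _.
set C := \sum_(0 <= j < m.+2) X m.+2 j *~ _.
set E := \sum_(0 <= i < m) Y i m.+1 *~ _.
set F := \sum_(0 <= i < m.+2) Y m i *~ _.
have hAD : A + D = 0 by apply: IH; lia.
set x := X m.+1 m.+1 *~ (-1) ^+ (m.+1 + m.+1).
set y := Y m m.+1 *~ (-1) ^+ (m.+1 + m).
have hBF : B + F = x + y.
  rewrite /B /F (big_nat_recr m.+1) //= (big_nat_recr m.+1) //=.
  have -> : \sum_(0 <= i < m.+1) X i m.+1 *~ (-1) ^+ (i + m.+1) =
            - \sum_(0 <= i < m.+1) Y m i *~ (-1) ^+ (i + m).
    rewrite -sumrN; apply: eq_big_nat => i hi.
    by rewrite h2 ?addnS ?sgS //; lia.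
  by rewrite addrACA addNr add0r.
have hCE : C + E = - (x + y).
  rewrite /C (big_nat_recr m.+1) //= (big_nat_recr m) //=.
  have -> : \sum_(0 <= j < m) X m.+2 j *~ (-1) ^+ (m.+2 + j) = - E.
    rewrite /E -sumrN; apply: eq_big_nat => j hj.
    by rewrite h3 ?addSn ?sgS //; lia.
  rewrite (h3 m.+1 m); last by lia.
  rewrite -(h1 m.+1); last by lia.
  rewrite [(m.+2 + m)%N]addSn sgS [(m.+2 + m.+1)%N]addSn sgS.
  rewrite -/x -/y (addrC _ E) !addrA addrN add0r.
  by rewrite opprD addrC.
rewrite addrACA (addrACA A) hAD add0r (addrC C F) addrACA (addrC E C) hBF hCE.
by rewrite addrN.
Qed.


Lemma bndE C (M : duplicial C) n : bnd M n = \sum_(0 <= i < n.+2) face M n i *~ (-1) ^+ i.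
Proof. by rewrite /bnd big_mkord. Qed.
Lemma ddE C (M : duplicial C) n : dd M n = \sum_(0 <= i < n.+2) degen M n i *~ (-1) ^+ i.
Proof. by rewrite /dd big_mkord. Qed.

Lemma sgM (V : zmodType) (x : V) a b : x *~ (-1) ^+ a *~ (-1) ^+ b = x *~ (-1) ^+ (b + a).
Proof. by rewrite -mulrzA exprD mulrC. Qed.

Lemma bb C (M : duplicial C) n : hcomp (bnd M n) (bnd M n.+1) = 0.
Proof.
rewrite !bndE hcomp_suml -[RHS](@dsum1 _ n.+1 (fun i j => hcomp (face M n i) (face M n.+1 j))); last first.
  by move=> i j h; exact: FF.
apply: eq_bigr => i _; rewrite hcompMzl hcomp_sumr mulrz_suml.
by apply: eq_bigr => j _; rewrite hcompMzr sgM addnC.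
Qed.

Lemma ddd C (M : duplicial C) n : hcomp (dd M n.+1) (dd M n) = 0.
Proof.
rewrite !ddE hcomp_suml.
rewrite -[RHS](@dsum1 _ n.+1 (fun c a => hcomp (degen M n.+1 a) (degen M n c))); last first.
  by move=> i j h; exact: SS.
under eq_bigr => a _ do rewrite hcompMzl hcomp_sumr mulrz_suml.
rewrite exchange_big_nat /=.
apply: eq_bigr => i _; apply: eq_bigr => j _.
by rewrite hcompMzr sgM addnC.
Qed.

Lemma P1 C (M : duplicial C) n :
  hcomp (bnd M n.+1) (\sum_(0 <= j < n.+2) degen M n.+1 j *~ (-1) ^+ j) +
  hcomp (\sum_(0 <= j < n.+1) degen M n j *~ (-1) ^+ j) (bnd M n) = 0.
Proof.
rewrite -[RHS](@dsum2 _ n.+1 (fun i j => hcomp (face M n.+1 i) (degen M n.+1 j))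
                             (fun j i => hcomp (degen M n j) (face M n i))); first last.
- by move=> i j h; exact: FSgt.
- by move=> i j h; apply: FSlt; lia.
- by move=> i h; rewrite FSid1 ?FSid2 //; lia.
congr (_ + _).
  rewrite bndE hcomp_suml; apply: eq_bigr => i _.
  rewrite hcompMzl hcomp_sumr mulrz_suml; apply: eq_bigr => j _.
  by rewrite hcompMzr sgM.
rewrite bndE hcomp_suml; apply: eq_bigr => j _.
rewrite hcompMzl hcomp_sumr mulrz_suml; apply: eq_bigr => i _.
by rewrite hcompMzr sgM addnC.
Qed.

Lemma P2 C (M : duplicial C) n :
  hcomp (bnd M n.+1) (degen M n.+1 n.+2) =
  hcomp (face M n.+1 0) (degen M n.+1 n.+2) +
  \sum_(0 <= i < n.+1) hcomp (degen M n n.+1) (face M n i.+1) *~ (-1) ^+ i.+1 +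
  idm _ *~ (-1) ^+ n.+2.
Proof.
rewrite bndE hcomp_suml big_nat_recl //= big_nat_recr //= hcompMzl expr0 mulr1z addrA.
congr (_ + _ + _).
  apply: eq_big_nat => i hi; rewrite hcompMzl (@FSlt _ M n i.+1 n.+1) //; lia.
by rewrite hcompMzl FSid1.
Qed.

Lemma P3 C (M : duplicial C) n :
  hcomp (degen M n n.+1) (bnd M n) =
  hcomp (degen M n n.+1) (face M n 0) +
  \sum_(0 <= i < n.+1) hcomp (degen M n n.+1) (face M n i.+1) *~ (-1) ^+ i.+1.
Proof.
rewrite bndE hcomp_sumr big_nat_recl //= hcompMzr expr0 mulr1z.
by congr (_ + _); apply: eq_bigr => i _; rewrite hcompMzr.
Qed.

Lemma cN C (M : duplicial C) n :
  hcomp (bnd M n.+1) (dd M n.+1) + hcomp (dd M n) (bnd M n) = idm _ - kappa M n.+1.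
Proof.
rewrite (ddE M n) (big_nat_recr n.+1) //= (ddE M n.+1) (big_nat_recr n.+2) //=.
rewrite hcompDr hcompDl hcompMzr hcompMzl addrACA P1 add0r P2 P3.
set t := hcomp (face M n.+1 0) _.
set g := hcomp (degen M n n.+1) (face M n 0).
set S := \sum_(0 <= i < n.+1) _.
set e := (-1) ^+ n.+1 : int.
rewrite (exprS _ n.+1) mulN1r -/e.
rewrite !mulrzDl !mulrNz mulNrz opprK -mulrzA -expr2 sqrr_sign mulr1z.
rewrite mulNrz opprD opprK (addrC (g *~ e)) addrA (addrAC (- (t *~ e) - S *~ e)) subrK.
by rewrite (addrC (- (t *~ e))) -addrA.
Qed.

Lemma c0 C (M : duplicial C) : hcomp (bnd M 0) (dd M 0) = idm _ - kappa M 0.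
Proof.
rewrite bndE ddE /index_iota /= !big_cons !big_nil !addr0.
rewrite !hcompDl !hcompDr !hcompMzl !hcompMzr.
rewrite (@FSid1 _ M 0 0) // (@FSid2 _ M 0 0) // (@FSid1 _ M 0 1) //.
by rewrite expr0 expr1 !mulr1z !mulrN1z opprK addNr addr0.
Qed.


Lemma kapE C (M : duplicial C) n : kappa M n.+1 =
  idm _ - (hcomp (bnd M n.+1) (dd M n.+1) + hcomp (dd M n) (bnd M n)).
Proof. by rewrite cN subKr. Qed.

Lemma kap0E C (M : duplicial C) : kappa M 0 = idm _ - hcomp (bnd M 0) (dd M 0).
Proof. by rewrite c0 subKr. Qed.

Lemma Bk C (M : duplicial C) n : hcomp (bnd M n) (kappa M n.+1) = hcomp (kappa M n) (bnd M n).
Proof.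
rewrite kapE hcompBr hcompm1 hcompDr !hcompA bb hcomp0l add0r.
case: n => [|m]; first by rewrite kap0E hcompBl hcomp1m.
by rewrite kapE hcompBl hcomp1m hcompDl -(hcompA (dd M m)) bb hcomp0r addr0.
Qed.

Lemma Dk C (M : duplicial C) n : hcomp (dd M n) (kappa M n) = hcomp (kappa M n.+1) (dd M n).
Proof.
rewrite kapE hcompBl hcomp1m hcompDl -(hcompA (bnd M n.+1)) ddd hcomp0r add0r.
case: n => [|m]; first by rewrite kap0E hcompBr hcompm1 !hcompA.
by rewrite kapE hcompBr hcompm1 hcompDr !hcompA ddd hcomp0l addr0.
Qed.

Lemma Bkp C (M : duplicial C) n k :
  hcomp (bnd M n) (kappa_pow M n.+1 k) = hcomp (kappa_pow M n k) (bnd M n).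
Proof.
elim: k => [|k IH]; first by rewrite !kp0 hcompm1 hcomp1m.
by rewrite !kpS hcompA Bk -hcompA IH hcompA.
Qed.

Lemma Dkp C (M : duplicial C) n k :
  hcomp (dd M n) (kappa_pow M n k) = hcomp (kappa_pow M n.+1 k) (dd M n).
Proof.
elim: k => [|k IH]; first by rewrite !kp0 hcompm1 hcomp1m.
by rewrite !kpS hcompA Dk -hcompA IH hcompA.
Qed.

Lemma kpSr C (M : duplicial C) n k : kappa_pow M n k.+1 = hcomp (kappa_pow M n k) (kappa M n).
Proof.
elim: k => [|k IH]; first by rewrite kpS !kp0 hcompm1 hcomp1m.
by rewrite [LHS]kpS [in LHS]IH hcompA -kpS.
Qed.

Lemma sgsq (V : zmodType) (x : V) a : x *~ (-1) ^+ a *~ (-1) ^+ a = x.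
Proof. by rewrite -mulrzA -expr2 sqrr_sign mulr1z. Qed.

Lemma Lpi C (M : duplicial C) n :
  dk_pi M n = kappa_pow M n n - hcomp (bnd M n) (hcomp (kappa_pow M n.+1 n) (dd M n)).
Proof.
set Kp := kappa_pow M n.+1 n.
set Q := hcomp (face M n 0) (hcomp Kp (degen M n n.+1)).
have g2 : forall i, (2 <= i <= n.+1)%N -> hcomp (face M n i) (hcomp Kp (dd M n)) = 0.
  move=> i hi; rewrite hcompA /Kp (@Lpow_F0 _ M n n i) ?hcomp0l //; lia.
have hz : forall i, (i < n)%N -> hcomp Kp (degen M n i) = 0.
  move=> i hi; rewrite /Kp Lpow_S0 //; lia.
have g0 : hcomp (face M n 0) (hcomp Kp (dd M n)) = kappa_pow M n n + Q *~ (-1) ^+ n.+1.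
  rewrite ddE !hcomp_sumr (big_nat_recr n.+1) // (big_nat_recr n) //=.
  rewrite (eq_big_nat _ _ (F2 := fun=> 0)) ?big1_eq ?add0r; last first.
    by move=> j hj; rewrite hcompMzr hz ?mul0rz ?hcomp0r //; lia.
  rewrite !hcompMzr /Kp (@Lpow_S _ M n n n ltac:(lia)) subnn.
  by rewrite hcompMzr hcompA FSid1 // hcomp1m sgsq.
have g1 : hcomp (face M n 1) (hcomp Kp (dd M n)) = kappa_pow M n n - kappa_pow M n n.
  rewrite ddE !hcomp_sumr (big_nat_recr n.+1) // (big_nat_recr n) //=.
  rewrite (eq_big_nat _ _ (F2 := fun=> 0)) ?big1_eq ?add0r; last first.
    by move=> j hj; rewrite hcompMzr hz ?mul0rz ?hcomp0r //; lia.
  rewrite !hcompMzr !hcompA /Kp (@Lpow_F _ M n n 1 isT ltac:(lia)).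
  rewrite !hcompMzl -!hcompA add1n FSid2 // FSid1 // !hcompm1 sgsq.
  by rewrite [(-1) ^+ n.+1]exprS mulN1r mulrNz sgsq.
rewrite bndE hcomp_suml big_nat_recl // big_nat_recl //.
rewrite (eq_big_nat _ _ (F2 := fun=> 0)) ?big1_eq ?addr0; last first.
  by move=> i hi; rewrite hcompMzl g2 ?mul0rz //; lia.
rewrite !hcompMzl g0 g1 subrr mul0rz addr0 expr0 mulr1z.
rewrite [(-1) ^+ n.+1]exprS mulN1r mulrNz.
by rewrite opprD addrA subrr add0r opprK.
Qed.


Lemma hDB C (M : duplicial C) n : hcomp (dd M n) (bnd M n) =
  idm _ - kappa M n.+1 - hcomp (bnd M n.+1) (dd M n.+1).
Proof. by rewrite -cN addrC addKr. Qed.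

Unset Implicit Arguments.

Theorem mainTheorem16 (C : preadditive) (M : duplicial C) :
  (forall n : nat, hcomp (bnd M n) (dk_pi M n.+1) = hcomp (dk_pi M n) (bnd M n)) /\
  (forall n : nat, hcomp (dd M n) (dk_pi M n) = hcomp (dk_pi M n.+1) (dd M n)).
Proof.
split=> n.
  have e1 : hcomp (bnd M n) (dk_pi M n.+1) = hcomp (kappa_pow M n n.+1) (bnd M n).
    by rewrite Lpi hcompBr hcompA bb hcomp0l subr0 Bkp.
  have z : hcomp (bnd M n) (hcomp (kappa_pow M n.+1 n) (hcomp (bnd M n.+1) (dd M n.+1))) = 0.
    by rewrite (hcompA (kappa_pow M n.+1 n)) -(Bkp M n.+1 n) !hcompA bb !hcomp0l.
  rewrite e1; set X := hcomp (kappa_pow M n n.+1) (bnd M n).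
  rewrite Lpi hcompBl -!hcompA hDB !hcompBr hcompm1 -kpSr z subr0 !Bkp.
  by rewrite subKr.
have f1 : hcomp (dd M n) (dk_pi M n) = hcomp (kappa_pow M n.+1 n.+1) (dd M n).
  set X := hcomp (kappa_pow M n.+1 n.+1) (dd M n).
  rewrite Lpi hcompBr Dkp hcompA hDB !hcompBl hcomp1m.
  have -> : hcomp (hcomp (bnd M n.+1) (dd M n.+1)) (hcomp (kappa_pow M n.+1 n) (dd M n)) = 0.
    by rewrite -hcompA (hcompA (dd M n.+1)) (Dkp M n.+1 n) -(hcompA (kappa_pow M n.+2 n)) ddd !hcomp0r.
  by rewrite subr0 hcompA -kpS subKr.
rewrite f1; set X := hcomp (kappa_pow M n.+1 n.+1) (dd M n).
rewrite Lpi hcompBl -(hcompA (bnd M n.+1)) -(hcompA (kappa_pow M n.+2 n.+1)) ddd !hcomp0r subr0.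
by [].
Qed.
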